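(* Let $G=(V,E)$ be a finite connected graph and $A$ an irreducible, lazy transition matrix on $V$, with $E_A=\{(i,j):A(i,j)>0\}$. Let $M$ be the transition matrix of the Markov chain on $\bar S=S\times V$ which moves from $(x,v)$ to $(T_{v'}x,v')$ with probability $A(v,v')$. For each $i\in V$ fix a finite integer $s(i)$ and a sequence $(i=i_1,\dots,i_{s(i)})$ with $(i_j,i_{j+1})\in E_A$ such that $x^{(i)}:=T_{i_{s(i)}}\cdots T_{i_1}(T_i)^{s(i)}x$ is the same for all $x\in S^{(i)}$, and let $\bar S_1=\{(x^{(i)},i_{s(i)}):i\in V\}$. Then $M$ is uniformly communicating to $\bar S_1$ with a finite communication time: there exist a finite integer $\bar s$ and $\bar\alpha'>0$ such that $$\inf_{(x,v)\in\bar S,\;\bar x\in\bar S_1}M^{\bar s}((x,v),\bar x)\ge\bar\alpha'.$$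
   Context: $S=(-\mathbb{N}_0)^V$ and $S^{(i)}=\{x\in S:x_i=0\}$. For $x\in S$ and $i\in V$, $T_ix\in S$ is obtained by first setting $x'_i=\max\{x_k:\operatorname{dist}(k,i)\le1\}+1$, $x'_j=x_j$ for $j\ne i$ (dist the graph distance in $G$), and then $(T_ix)_j=x'_j-\max_kx'_k$. Irreducible: for all $v\neq v'$ there is $s$ with $A^s(v,v')>0$; lazy: $A(v,v)>0$ for all $v$. (Sequences as required for each $i$ exist.) *)

(* Defs.v *)
From HB Require Import structures.
From mathcomp Require Import all_boot all_order all_algebra.
Set Implicit Arguments. Unset Strict Implicit. Unset Printing Implicit Defensive.
Import Order.TTheory GRing.Theory Num.Theory.
Local Open Scope ring_scope.

Section Defs.
Variable V : finType.

Definition simple_graph (e : rel V) : Prop := symmetric e /\ irreflexive e.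
Definition connected_graph (e : rel V) : Prop := forall u v : V, connect e u v.

(* Configurations: S = (-N_0)^V, elements x : V -> int with x_v <= 0. *)
Definition config := {ffun V -> int}.
Definition inS (x : config) : Prop := forall v, x v <= 0.
Definition inSi (i : V) (x : config) : Prop := inS x /\ x i = 0.

(* T_i: x'_i = max{x_k : dist(k,i) <= 1} + 1 (dist(k,i) <= 1 iff k = i or k ~ i),
   x'_j = x_j otherwise, then (T_i x)_j = x'_j - max_k x'_k. *)
Definition Tmap (e : rel V) (i : V) (x : config) : config :=
  let m := \big[Order.max/x i]_(k | e k i) x k in
  let x' : config := [ffun j => if j == i then m + 1 else x j] in
  let M := \big[Order.max/x' i]_(k : V) x' k in
  [ffun j => x' j - M].

Definition xseq (e : rel V) (i : V) (sq : seq V) (x : config) : config :=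
  foldl (fun y j => Tmap e j y) (iter (size sq) (Tmap e i) x) sq.

Variable R : realFieldType.

Definition stochastic (A : V -> V -> R) : Prop :=
  (forall u v, 0 <= A u v) /\ (forall u, \sum_(v : V) A u v = 1).

Fixpoint Apow (A : V -> V -> R) (s : nat) (u v : V) : R :=
  match s with
  | 0 => (u == v)%:R
  | s'.+1 => \sum_(w : V) A u w * Apow A s' w v
  end.

Definition irreducible (A : V -> V -> R) : Prop :=
  forall v v', v != v' -> exists s, 0 < Apow A s v v'.
Definition lazy (A : V -> V -> R) : Prop := forall v, 0 < A v v.

Definition Mker (e : rel V) (A : V -> V -> R) (x : config) (v : V)
  (y : config) (w : V) : R := A v w * (y == Tmap e w x)%:R.

(* M^s((x,v),(y,w)).  Row (x,v) of M is supported on the finitely many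
   distinct states (T_{v'} x, v'), so the matrix product reduces to a finite sum. *)
Fixpoint Mpow (e : rel V) (A : V -> V -> R) (s : nat) (x : config) (v : V)
  (y : config) (w : V) : R :=
  match s with
  | 0 => ((x == y) && (v == w))%:R
  | s'.+1 => \sum_(v' : V) Mker e A x v (Tmap e v' x) v' * Mpow e A s' (Tmap e v' x) v' y w
  end.

End Defs.

(* Main.v *)
Require Import Defs.
From HB Require Import structures.
From mathcomp Require Import all_boot all_order all_algebra.
From mathcomp Require Import zify.
Import Order.TTheory GRing.Theory Num.Theory.
Local Open Scope ring_scope.
Set Implicit Arguments. Unset Strict Implicit. Unset Printing Implicit Defensive.

Section T.
Variables (V : finType) (e : rel V).

Definition Pb (x : config V) (k : V) (d : nat) := forall j, x j <= x k + d%:Z.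

Lemma Tmap_spec w (x : config V) : exists m M : int,
  x w <= m /\ (forall u, e u w -> x u <= m) /\
  (forall B : int, x w <= B -> (forall u, e u w -> x u <= B) -> m <= B) /\
  (forall j, (if j == w then m + 1 else x j) <= M) /\
  (forall B : int, (forall j, (if j == w then m + 1 else x j) <= B) -> M <= B) /\
  forall j, Tmap e w x j = (if j == w then m + 1 else x j) - M.
Proof.
rewrite /Tmap.
set m := \big[Order.max/x w]_(k | e k w) x k.
set x' := [ffun j => if j == w then m + 1 else x j].
exists m, (\big[Order.max/x' w]_(k : V) x' k); split; [|split; [|split; [|split; [|split]]]].
- exact: bigmax_ge_id.
- by move=> u hu; apply: le_bigmax_cond.
- by move=> B h1 h2; apply/bigmax_leP; split.
- by move=> j; have := le_bigmax (x' w) (fun k => x' k) j; rewrite /x' ffunE.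
- by move=> B h; apply/bigmax_leP; split => [|j _]; [have := h w|have := h j]; rewrite /x' ffunE.
- by move=> j; rewrite /x' !ffunE.
Qed.

Lemma Tmap_S w x : inS (Tmap e w x).
Proof.
have [m [M [_ [_ [_ [h1 [_ h2]]]]]]] := Tmap_spec w x.
by move=> j; rewrite h2 subr_le0.
Qed.

Lemma Tmap_Si w x k : Pb (Tmap e w x) k 0 -> inSi k (Tmap e w x).
Proof.
have [m [M [_ [_ [_ [h1 [h3 h2]]]]]]] := Tmap_spec w x.
move=> hP; split; first exact: Tmap_S.
have : M <= (if k == w then m + 1 else x k).
  apply: h3 => j; have := hP j; rewrite !h2 addr0; by rewrite lerD2r.
move: (h1 k); rewrite h2; lia.
Qed.

Lemma Tmap_grow w x k d : Pb x k d -> Pb (Tmap e w x) k d.+1.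
Proof.
have [m [M [hw [hu [hB [h1 [h3 h2]]]]]]] := Tmap_spec w x.
move=> hP j; rewrite !h2.
have hm : m <= x k + d%:Z by apply: hB => // u _; apply: hP.
have := hP j; have := hP w.
have hwm := hw. case: (j =P w) => [->|_]; case: (k =P w) => [->|_]; rewrite ?eqxx /=; move=> *; lia.
Qed.

Lemma Tmap_arrive w x u d : (u == w) || e u w -> Pb x u d -> Pb (Tmap e w x) w d.-1.
Proof.
have [m [M [hw [hu [hB [h1 [h3 h2]]]]]]] := Tmap_spec w x.
move=> huw hP j; rewrite !h2 eqxx.
have hm : x u <= m by case/orP: huw => [/eqP ->|/hu].
have := hP j.
case: (j =P w) => [->|_]; rewrite ?eqxx; lia.
Qed.

Definition run (x : config V) (ws : seq V) := foldl (fun y j => Tmap e j y) x ws.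

Lemma run_grow ws x k d : Pb x k d -> Pb (run x ws) k (d + size ws).
Proof.
elim: ws x d => [|w ws IH] x d /=; first by rewrite addn0.
by move=> h; rewrite addnS -addSn; apply: IH; apply: Tmap_grow.
Qed.

Lemma run_stay n p x u d : (u == p) || e u p -> Pb x u d ->
  Pb (run x (nseq n.+1 p)) p (d - n.+1).
Proof.
elim: n x u d => [|n IH] x u d hu hP.
  by rewrite /= subn1; apply: Tmap_arrive hP.
rewrite [nseq _ _]/= /run /= -/(run _ _).
have -> : (d - n.+2 = d.-1 - n.+1)%N by lia.
by apply: IH (Tmap_arrive hu hP); rewrite eqxx.
Qed.

Lemma run_last x ws : ws != [::] -> exists y0 w, run x ws = Tmap e w y0.
Proof.
case/lastP: ws => [//|s w] _; exists (run x s), w.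
by rewrite /run foldl_rcons.
Qed.

Lemma run_cat x s1 s2 : run x (s1 ++ s2) = run (run x s1) s2.
Proof. by rewrite /run foldl_cat. Qed.

Lemma run_nseq x n p : run x (nseq n p) = iter n (Tmap e p) x.
Proof. elim: n x => [|n IH] x //. by rewrite iterSr -IH. Qed.


Variables (R : realFieldType) (A : V -> V -> R).
Hypothesis A0 : forall u w, 0 <= A u w.

Definition Reach x v n y w := exists ws : seq V, size ws = n /\
  path (fun a b => 0 < A a b) v ws /\ last v ws = w /\ run x ws = y.

Lemma Reach0 x v : Reach x v 0 x v.
Proof. by exists [::]. Qed.

Lemma Reach_cat x v n1 y w n2 z t : Reach x v n1 y w -> Reach y w n2 z t ->
  Reach x v (n1 + n2) z t.
Proof.
move=> [s1 [h1 [p1 [l1 r1]]]] [s2 [h2 [p2 [l2 r2]]]]; exists (s1 ++ s2).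
by rewrite size_cat cat_path last_cat run_cat p1 l1 r1 h1 h2 p2 l2 r2.
Qed.

Lemma Mpow_ge0 s x v y w : 0 <= Mpow e A s x v y w.
Proof.
elim: s x v => [|s IH] x v /=; first by rewrite ler0n.
by apply: sumr_ge0 => v' _; rewrite mulr_ge0 // /Mker mulr_ge0 // ler0n.
Qed.

Lemma Mpow_path (a : R) ws x v : 0 < a -> (forall u w, 0 < A u w -> a <= A u w) ->
  path (fun a b => 0 < A a b) v ws ->
  a ^+ size ws <= Mpow e A (size ws) x v (run x ws) (last v ws).
Proof.
move=> a0 ha; elim: ws x v => [|j ws IH] x v /=; first by rewrite !eqxx expr0.
case/andP=> hvj hp.
rewrite (bigD1 j) //= /Mker eqxx mulr1 exprS.
rewrite -[a * _]addr0; apply: lerD.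
  by apply: ler_pM; [exact: ltW|rewrite exprn_ge0 // ltW|exact: ha|exact: IH].
by apply: sumr_ge0 => v' _; rewrite mulr_ge0 // ?Mpow_ge0 // mulr_ge0 // ler0n.
Qed.

Lemma Reach_Mpow (a : R) x v n y w : 0 < a -> (forall u w, 0 < A u w -> a <= A u w) ->
  Reach x v n y w -> a ^+ n <= Mpow e A n x v y w.
Proof.
move=> a0 ha [ws [<- [hp [<- <-]]]]; exact: Mpow_path.
Qed.


Definition Nr := fun a b : V => (a == b) || e a b.

Lemma path_nseq (r : rel V) p n : r p p -> path r p (nseq n p).
Proof. by move=> hp; elim: n => //= n ->; rewrite hp. Qed.

Lemma last_nseq (p : V) n : last p (nseq n p) = p.
Proof. by elim: n. Qed.

Lemma inSi_Pb p y : inSi p y -> Pb y p 0.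
Proof. by move=> [hS hp] j; rewrite hp add0r; apply: hS. Qed.

Lemma stage Lw x v p u ws : 0 < A p p -> Nr u p -> Pb x u 0 ->
  path (fun a b => 0 < A a b) v ws -> last v ws = p -> (size ws <= Lw)%N ->
  exists y, Reach x v (2 * Lw + 1) y p /\ inSi p y.
Proof.
move=> hpp hu hP hw hl hs.
set c := (2 * Lw - size ws)%N.
exists (run x (ws ++ nseq c.+1 p)); split.
  exists (ws ++ nseq c.+1 p); split; first by rewrite size_cat size_nseq /c; lia.
  by rewrite cat_path hw last_cat hl last_nseq path_nseq.
rewrite run_cat.
have := run_stay c hu (run_grow ws hP).
have -> : (0 + size ws - c.+1 = 0)%N by rewrite /c; lia.
have [y0 [w hy]] := run_last (run x ws) (ws := nseq c.+1 p) isT.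
rewrite hy; exact: Tmap_Si.
Qed.

Lemma chain Lw (ts : seq V) : (forall p, 0 < A p p) ->
  (forall a b, exists ws, path (fun a b => 0 < A a b) a ws /\ last a ws = b /\ (size ws <= Lw)%N) ->
  forall x v u p, Pb x u 0 -> path Nr u (p :: ts) ->
  exists y, Reach x v ((size ts).+1 * (2 * Lw + 1)) y (last p ts) /\ inSi (last p ts) y.
Proof.
move=> hl hW; elim: ts => [|t ts IH] x v u p hP /=.
  rewrite andbT mul1n => hu.
  have [ws [hw [hlw hs]]] := hW v p.
  exact: stage hu hP hw hlw hs.
case/andP=> hu hpt.
have [ws [hw [hlw hs]]] := hW v p.
have [y1 [R1 S1]] := stage (hl p) hu hP hw hlw hs.
have [y [R2 S2]] := IH y1 p p t (inSi_Pb S1) hpt.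
exists y; split => //.
by rewrite mulSn; apply: Reach_cat R1 R2.
Qed.

Lemma stay_pad p y n : 0 < A p p -> inSi p y -> exists y', Reach y p n y' p /\ inSi p y'.
Proof.
move=> hpp hy; case: n => [|n]; first by exists y; split => //; apply: Reach0.
exists (run y (nseq n.+1 p)); split.
  exists (nseq n.+1 p); split; first by rewrite size_nseq.
  by rewrite path_nseq // last_nseq.
have hN : Nr p p by rewrite /Nr eqxx.
have := run_stay n hN (inSi_Pb hy).
rewrite sub0n.
have [y0 [w hw]] := run_last y (ws := nseq n.+1 p) isT.
rewrite hw; exact: Tmap_Si.
Qed.

End T.

Section Aux.
Variables (V : finType) (R : realFieldType) (A : V -> V -> R).
Hypothesis A0 : forall u w, 0 <= A u w.

Lemma Apow_ge0 s u v : 0 <= Apow A s u v.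
Proof.
elim: s u => [|s IH] u /=; first by rewrite ler0n.
by apply: sumr_ge0 => w _; rewrite mulr_ge0.
Qed.

Lemma walk_of_Apow s a b : 0 < Apow A s a b ->
  exists ws, path (fun a b => 0 < A a b) a ws /\ last a ws = b.
Proof.
elim: s a => [|s IH] a /=.
  by case: eqP => [->|]; [exists [::]|rewrite ltxx].
move=> hs.
case: (boolP [exists w, 0 < A a w * Apow A s w b]) => [/existsP [w hw]|/existsPn H].
  have hA : 0 < A a w.
    rewrite lt0r A0 andbT; apply/negP => /eqP h0; move: hw; by rewrite h0 mul0r ltxx.
  have hP : 0 < Apow A s w b.
    rewrite lt0r Apow_ge0 andbT; apply/negP => /eqP h0; move: hw; by rewrite h0 mulr0 ltxx.
  have [ws [hp hl]] := IH _ hP.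
  by exists (w :: ws); rewrite /= hA hp.
exfalso; move: hs; apply/negP; rewrite -leNgt.
by apply: sumr_le0 => w _; have := H w; rewrite -leNgt.
Qed.

Lemma pos_lb (T : finType) (f : T -> R) : exists a : R, 0 < a /\ forall t, 0 < f t -> a <= f t.
Proof.
suff: forall s : seq T, exists a : R, 0 < a /\ forall t, t \in s -> 0 < f t -> a <= f t.
  by move=> /(_ (enum T)) [a [ha H]]; exists a; split => // t; apply: H; rewrite mem_enum.
elim => [|t s [a [ha H]]]; first by exists 1; split.
case: (boolP (0 < f t)) => ht.
  exists (if f t < a then f t else a); split; first by case: ifP.
  move=> t'; rewrite inE => /orP [/eqP -> _|/H h ht'].
    by case: ifP => hh; [exact: lexx|rewrite leNgt hh].
  have := h ht'; case: ifP => hh // h2.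
  exact: le_trans (ltW hh) h2.
exists a; split => // t'; rewrite inE => /orP [/eqP ->|/H //]; by rewrite (negbTE ht).
Qed.
End Aux.

Lemma fin_bound (T : finType) (Q : T -> nat -> Prop) :
  (forall t, exists n, Q t n) -> exists N, forall t, exists n, (n <= N)%N /\ Q t n.
Proof.
move=> H.
suff: forall s : seq T, exists N, forall t, t \in s -> exists n, (n <= N)%N /\ Q t n.
  by move=> /(_ (enum T)) [N HN]; exists N => t; apply: HN; rewrite mem_enum.
elim => [|t s [N HN]]; first by exists 0%N.
have [n hn] := H t.
exists (maxn n N) => t'; rewrite inE => /orP [/eqP ->|/HN [m [hm hq]]].
  by exists n; split => //; rewrite leq_maxl.
by exists m; split => //; apply: leq_trans hm (leq_maxr _ _).
Qed.

Lemma exists_max (T : finType) (t0 : T) (f : T -> int) : exists z, forall j, f j <= f z.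
Proof.
case: (@arg_maxP _ _ T t0 xpredT f isT) => z _ h.
by exists z => j; apply: h.
Qed.

Unset Implicit Arguments.
Set Strict Implicit.
Theorem mainTheorem10 (V : finType) (R : realFieldType) (e : rel V) (A : V -> V -> R)
  (sq : V -> seq V) :
  simple_graph e -> connected_graph e ->
  stochastic A -> irreducible A -> lazy A ->
  (* the sequences (i = i_1, ..., i_{s(i)}) with (i_j, i_{j+1}) in E_A *)
  (forall i, sq i != [::]) ->
  (forall i, head i (sq i) = i) ->
  (forall i, path (fun a b => 0 < A a b) i (behead (sq i))) ->
  (* x^(i) is the same for all x in S^(i) *)
  (forall i x y, inSi i x -> inSi i y -> xseq e i (sq i) x = xseq e i (sq i) y) ->
  exists (sbar : nat) (alpha : R), 0 < alpha /\
    forall (x : config V) (v : V), inS x ->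
    forall (i : V) (z : config V), inSi i z ->
      alpha <= Mpow e A sbar x v (xseq e i (sq i) z) (last i (sq i)).
Proof.
move=> _ hconn [hA0 _] hirr hlazy hne hhead hpath hconst.
have [a [a0 ha']] := pos_lb (fun p : V * V => A p.1 p.2).
have ha : forall u w, 0 < A u w -> a <= A u w by move=> u w /(ha' (u, w)).
have /fin_bound [Lw HW] : forall p : V * V, exists n, exists ws,
   path (fun a b => 0 < A a b) p.1 ws /\ last p.1 ws = p.2 /\ size ws = n.
  move=> [a1 b] /=; case: (a1 =P b) => [->|hab]; first by exists 0%N, [::].
  have [s hs] := hirr a1 b (introN eqP hab).
  have [ws [hw hl]] := walk_of_Apow hA0 hs.
  by exists (size ws), ws.
have /fin_bound [Lg HG] : forall p : V * V, exists n, exists gp,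
   path e p.1 gp /\ last p.1 gp = p.2 /\ size gp = n.
  by move=> [z i] /=; have /connectP [gp hp hl] := hconn z i; exists (size gp), gp.
have /fin_bound [Ls HS] : forall i, exists n, size (sq i) = n by move=> i; exists (size (sq i)).
set K := (2 * Lw + 1)%N.
exists (Lg.+1 * K + 2 * Ls)%N, (a ^+ (Lg.+1 * K + 2 * Ls)).
split; first exact: exprn_gt0.
move=> x v hx i z hz.
apply: (Reach_Mpow hA0) a0 ha _.
have [zm hzm] := exists_max v (fun j => x j).
have Pz : Pb x zm 0 by move=> j; rewrite addr0.
have [n [hn [gp [hgp [hgl hgs]]]]] := HG (zm, i).
have HW' : forall a b, exists ws, path (fun a b => 0 < A a b) a ws /\ last a ws = b
    /\ (size ws <= Lw)%N.
  move=> a1 b; have [k [hk [ws [h1 [h2 h3]]]]] := HW (a1, b).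
  by exists ws; rewrite h3.
set ts := gp ++ nseq (Lg - size gp) i.
have hts : path (Nr e) zm (zm :: ts).
  rewrite /= /Nr eqxx /= /ts cat_path; apply/andP; split.
    by apply: sub_path hgp => a1 b /= ->; rewrite orbT.
  by rewrite /= in hgl; rewrite hgl path_nseq // /Nr eqxx.
have hlast : last zm ts = i by rewrite /ts last_cat /= hgl last_nseq.
have hsize : size ts = Lg by rewrite /ts size_cat size_nseq /=; lia.
have [y [R1 S1]] := @chain _ e _ A Lw ts hlazy HW' x v zm zm Pz hts.
rewrite hlast hsize in R1 S1.
have [m [hm hms]] := HS i.
have [y' [R2 S2]] := @stay_pad _ e _ A i y (2 * Ls - 2 * size (sq i)) (hlazy i) S1.
have R3 : Reach e A y' i (2 * size (sq i)) (xseq e i (sq i) y') (last i (sq i)).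
  exists (nseq (size (sq i)) i ++ sq i); split; first by rewrite size_cat size_nseq; lia.
  split.
    rewrite cat_path path_nseq // last_nseq.
    have := hpath i; have := hhead i; have := hne i.
    by case: (sq i) => [//|j rest] _ /= -> ->; rewrite hlazy.
  split; first by rewrite last_cat last_nseq.
  by rewrite run_cat run_nseq.
rewrite -(hconst i y' z S2 hz).
have -> : (Lg.+1 * K + 2 * Ls = Lg.+1 * K + (2 * Ls - 2 * size (sq i)) + 2 * size (sq i))%N.
  rewrite -hms in hm; lia.
exact: Reach_cat (Reach_cat R1 R2) R3.
Qed.
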